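(* For every positive integer $n$ there exists a graph $G$ with $St_{dom}(G)=n$.
   Context: A dominated coloring of a graph is a proper coloring in which every color class is dominated by at least one vertex, i.e. for each color class $C$ there is a vertex adjacent to every vertex of $C$; $\chi_{dom}(G)$ is the minimum number of colors in a dominated coloring. The dom-stability $St_{dom}(G)$ is the minimum number of vertices of $G$ whose removal changes the dominated chromatic number of $G$. *)

(* Defs.v *)
From mathcomp Require Import all_boot.
Set Implicit Arguments. Unset Strict Implicit. Unset Printing Implicit Defensive.

Definition simple_graph (T : finType) (e : rel T) : Prop :=
  irreflexive e /\ symmetric e.

Definition no_isolated (T : finType) (e : rel T) : Prop :=
  forall x : T, exists y : T, e x y.

(* c is a dominated coloring with (at most) k colors (colors 0..k-1) of the
   subgraph of (T,e) induced by the vertex set A. *)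
Definition dominated_coloring (T : finType) (e : rel T) (A : {set T})
    (k : nat) (c : T -> nat) : Prop :=
  (forall x, x \in A -> c x < k) /\
  (forall x y, x \in A -> y \in A -> e x y -> c x != c y) /\
  (forall i, i < k -> (exists x, x \in A /\ c x = i) ->
     exists v, v \in A /\ forall x, x \in A -> c x = i -> e v x).

Definition is_chi_dom (T : finType) (e : rel T) (A : {set T}) (k : nat) : Prop :=
  (exists c, dominated_coloring e A k c) /\
  (forall j c, j < k -> ~ dominated_coloring e A j c).

(* Removing S changes the dominated chromatic number: chi_dom(G - S) differs
   from chi_dom(G) (in particular when G - S has no dominated coloring). *)
Definition changes_chi_dom (T : finType) (e : rel T) (S : {set T}) : Prop :=
  ~ (forall k, is_chi_dom e [set: T] k <-> is_chi_dom e (~: S) k).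

Definition is_St_dom (T : finType) (e : rel T) (n : nat) : Prop :=
  (exists S : {set T}, #|S| = n /\ changes_chi_dom e S) /\
  (forall S : {set T}, #|S| < n -> ~ changes_chi_dom e S).

(* Main.v *)
Require Import Defs.
From mathcomp Require Import all_boot.

Section K.
Variable n : nat.
Definition KT := (bool * 'I_n)%type.
Definition ke : rel KT := fun x y => x.1 != y.1.

Lemma chi2 (A : {set KT}) a b : a \in A -> b \in A -> a.1 -> ~~ b.1 ->
  is_chi_dom ke A 2.
Proof.
move=> aA bA ha hb; split.
  exists (fun x : KT => nat_of_bool x.1); split; first by move=> x _; case: x.1.
  split.
    by move=> x y _ _; rewrite /ke; case: x.1; case: y.1.
  move=> i _ [x [xA cx]]; case: (boolP x.1) => hx.
    exists b; split=> // y _; rewrite -cx hx /ke; case: y.1; case: b.1 hb => //.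
  exists a; split=> // y _; rewrite -cx (negbTE hx) /ke; case: y.1; case: a.1 ha => //.
move=> j c lt [hc [hp _]].
have ca := hc a aA; have cb := hc b bA.
have := hp a b aA bA; rewrite /ke; case: a.1 ha => // _; case: b.1 hb => // _.
move=> /(_ isT); clear hc hp; move: lt ca cb; case: j => [|[|]]//.
by case: (c a) => //; case: (c b).
Qed.

Lemma chi_uniq (A : {set KT}) k k' : is_chi_dom ke A k -> is_chi_dom ke A k' -> k = k'.
Proof.
move=> [[c hc] h1] [[c' hc'] h2].
case: (ltngtP k k') => // lt; [exact: (False_ind _ (h2 _ c lt hc)) | exact: (False_ind _ (h1 _ c' lt hc'))].
Qed.
End K.

Theorem mainTheorem10 (n : nat) (hn : 0 < n) :
  exists (T : finType) (e : rel T),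
    simple_graph e /\ no_isolated e /\ is_St_dom e n.
Proof.
exists (KT n), (@ke n); split.
  by split; [move=> x; rewrite /ke eqxx | move=> x y; rewrite /ke eq_sym].
split; first by move=> x; exists (~~ x.1, x.2); rewrite /ke; case: x.1.
have side b : #|setX [set b] [set: 'I_n]| = n by rewrite cardsX cards1 cardsT card_ord mul1n.
have full : is_chi_dom (@ke n) [set: KT n] 2.
  by apply: (@chi2 n _ (true, Ordinal hn) (false, Ordinal hn)); rewrite ?in_setT.
split.
  exists (setX [set true] [set: 'I_n]); split; first exact: side.
  move=> /(_ 2) [/(_ full) [[c [hc [_ hd]]] _] _].
  have xA : (false, Ordinal hn) \in ~: setX [set true] [set: 'I_n].
    by rewrite in_setC !inE.
  have [v [vA /(_ _ xA erefl)]] := hd _ (hc _ xA) (ex_intro _ _ (conj xA erefl)).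
  by move: vA; rewrite in_setC !inE andbT /ke; case: v.1.
move=> S hS hch; apply: hch => k.
have pick b : exists x, x \in ~: S /\ x.1 = b.
  case: (boolP (setX [set b] [set: 'I_n] \subset S)) => [sub|].
    by have := subset_leq_card sub; rewrite side leqNgt hS.
  case/subsetPn=> -[y1 y2]; rewrite !inE andbT => /eqP <- xS.
  by exists (y1, y2); rewrite in_setC xS.
have [a [aA ha]] := pick true; have [b [bA hb]] := pick false.
have h2 : is_chi_dom (@ke n) (~: S) 2 by apply: (@chi2 n _ a b aA bA); rewrite ?ha ?hb.
split=> h.
  by rewrite (@chi_uniq n _ _ _ h full).
by rewrite (@chi_uniq n _ _ _ h h2).
Qed.
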